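(* Let $k$ be a positive integer and let $T = (V, E)$ be a $k$-good graph. Then there exists a multiset $\mathbf{Msets}$ of subsets of $V$ such that: (a) for any two different members $X, Y$ of $\mathbf{Msets}$, $|X \cap Y| < 2$; (b) every $X \in \mathbf{Msets}$ is a clique in $T$; (c) for every $u \in V$, there are exactly $k$ members $X$ of $\mathbf{Msets}$ (counted with multiplicity) with $u \in X$; (d) for every edge $uv \in E$, there is exactly one member $X \in \mathbf{Msets}$ with $u, v \in X$.
   Context: A finite simple undirected graph $T$ is $k$-good if for every vertex $u$ of $T$, the neighbourhood $N_T(u)$ can be partitioned into $k$ pairwise disjoint (possibly empty) subsets $S_1(u), \dots, S_k(u)$ such that each nonempty $S_i(u)$ is a clique of $T$ and no edge of $T$ joins a vertex of $S_i(u)$ to a vertex of $S_j(u)$ for distinct $i,j$. *)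

(* Defs.v *)
From mathcomp Require Import all_boot.
Set Implicit Arguments. Unset Strict Implicit. Unset Printing Implicit Defensive.

Definition simple_graph (T : finType) (e : rel T) : Prop :=
  symmetric e /\ irreflexive e.

Definition nbhd (T : finType) (e : rel T) (u : T) : {set T} := [set v | e u v].

Definition is_clique (T : finType) (e : rel T) (X : {set T}) : Prop :=
  forall x y, x \in X -> y \in X -> x != y -> e x y.

Definition k_good (T : finType) (e : rel T) (k : nat) : Prop :=
  forall u : T, exists S : 'I_k -> {set T},
    [/\ (forall i j, i != j -> [disjoint S i & S j]),
        \bigcup_(i < k) S i = nbhd e u,
        (forall i, S i != set0 -> is_clique e (S i)) &
        (forall i j x y, i != j -> x \in S i -> y \in S j -> ~~ e x y)].

(* Main.v *)
Require Import Defs.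
From mathcomp Require Import all_boot.
Set Implicit Arguments. Unset Strict Implicit. Unset Printing Implicit Defensive.

Definition Cl (T : finType) (e : rel T) (u v : T) : {set T} :=
  [set x | [|| x == u, x == v | e u x && e v x]].

Definition Fam (T : finType) (e : rel T) : {set {set T}} :=
  [set X : {set T} | [exists u, exists v, e u v && (X == Cl e u v)]].

Lemma Cl_l (T : finType) (e : rel T) u v : u \in Cl e u v.
Proof. by rewrite inE eqxx. Qed.
Lemma Cl_r (T : finType) (e : rel T) u v : v \in Cl e u v.
Proof. by rewrite inE eqxx orbT. Qed.

Lemma part_eq (T : finType) (e : rel T) (k : nat) (S : 'I_k -> {set T}) (v x : T) i j :
  symmetric e ->
  (forall i j x y, i != j -> x \in S i -> y \in S j -> ~~ e x y) ->
  e v x -> v \in S i -> x \in S j -> i = j.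
Proof.
move=> sym Hne evx vi xj; apply/eqP; apply/negPn/negP => ij.
by have := Hne _ _ _ _ ij vi xj; rewrite evx.
Qed.

Lemma Cl_clique (T : finType) (e : rel T) (k : nat) u v :
  simple_graph e -> k_good e k -> e u v -> is_clique e (Cl e u v).
Proof.
move=> [sym irr] kg euv x y; rewrite !inE.
have [S [Hdis Hcup Hcl Hne]] := kg u.
have inS : forall w, e u w -> exists i, w \in S i.
  move=> w euw; have : w \in nbhd e u by rewrite inE.
  by rewrite -Hcup => /bigcupP [i _ wi]; exists i.
case/orP => [/eqP -> | /orP [/eqP -> | /andP [eux evx]]];
case/orP => [/eqP -> | /orP [/eqP -> | /andP [euy evy]]];
  move=> xy; rewrite ?eqxx in xy; try done; try by rewrite sym.
  move: xy.
have [i vi] := inS v euv.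
have [j xj] := inS x eux.
have [l yl] := inS y euy.
have ij := part_eq sym Hne evx vi xj.
have il := part_eq sym Hne evy vi yl.
subst j l => xy.
have : S i != set0 by apply/set0Pn; exists v.
by move/Hcl => /(_ x y xj yl xy).
Qed.

Lemma clique_sub (T : finType) (e : rel T) X x y :
  is_clique e X -> x \in X -> y \in X -> x != y -> X \subset Cl e x y.
Proof.
move=> cX xX yX xy; apply/subsetP => z zX; rewrite inE.
case: (eqVneq z x) => //= zx; case: (eqVneq z y) => //= zy.
by rewrite cX // 1?eq_sym // cX // eq_sym.
Qed.

Lemma Cl_eq (T : finType) (e : rel T) (k : nat) u v x y :
  simple_graph e -> k_good e k -> e u v ->
  x \in Cl e u v -> y \in Cl e u v -> x != y -> Cl e x y = Cl e u v.
Proof.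
move=> G kg euv xC yC xy.
have cuv := Cl_clique G kg euv.
have s1 := clique_sub cuv xC yC xy.
have exy : e x y by apply: cuv.
have cxy := Cl_clique G kg exy.
have uv : u != v by apply/eqP => uv; move: euv; rewrite uv (proj2 G).
apply/eqP; rewrite eqEsubset s1 andbT.
apply: clique_sub => //; apply: (subsetP s1); [exact: Cl_l | exact: Cl_r].
Qed.

Lemma Fam_clique (T : finType) (e : rel T) (k : nat) X :
  simple_graph e -> k_good e k -> X \in Fam e -> is_clique e X.
Proof.
move=> G kg; rewrite inE => /existsP [a /existsP [b /andP [eab /eqP ->]]].
exact: Cl_clique G kg eab.
Qed.

Lemma Fam_eq (T : finType) (e : rel T) (k : nat) X x y :
  simple_graph e -> k_good e k -> X \in Fam e -> x \in X -> y \in X -> x != y ->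
  X = Cl e x y.
Proof.
move=> G kg; rewrite inE => /existsP [a /existsP [b /andP [eab /eqP ->]]] xX yX xy.
by rewrite (Cl_eq G kg eab xX yX xy).
Qed.

Lemma Cl_in_Fam (T : finType) (e : rel T) u v : e u v -> Cl e u v \in Fam e.
Proof.
by move=> euv; rewrite inE; apply/existsP; exists u; apply/existsP; exists v; rewrite euv eqxx.
Qed.

Lemma Fam_inter (T : finType) (e : rel T) (k : nat) X Y :
  simple_graph e -> k_good e k -> X \in Fam e -> Y \in Fam e -> X != Y ->
  #|X :&: Y| < 2.
Proof.
move=> G kg XF YF XY; rewrite ltnNge; apply/negP => /card_gt1P [x [y [xI yI xy]]].
move: xI yI; rewrite !inE => /andP [xX xY] /andP [yX yY].
by move: XY; rewrite (Fam_eq G kg XF xX yX xy) (Fam_eq G kg YF xY yY xy) eqxx.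
Qed.

Lemma Fam_deg (T : finType) (e : rel T) (k : nat) u :
  simple_graph e -> k_good e k -> #|[set X in Fam e | u \in X]| <= k.
Proof.
move=> G kg; have [sym irr] := G.
have [S [Hdis Hcup Hcl Hne]] := kg u.
pose f i := Cl e u (odflt u [pick w in S i]).
apply: (@leq_trans #|[set f i | i in 'I_k]|); last first.
  by apply: leq_trans (leq_imset_card _ _) _; rewrite card_ord.
apply: subset_leq_card; apply/subsetP => X; rewrite inE => /andP [XF uX].
move: (XF); rewrite inE => /existsP [a /existsP [b /andP [eab /eqP Xab]]].
have [w [wX wu]] : exists w, w \in X /\ w != u.
  case: (eqVneq a u) => au.
    exists b; split; first by rewrite Xab Cl_r.
    by apply/eqP => bu; move: eab; rewrite au bu irr.
  by exists a; split; first by rewrite Xab Cl_l.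
have XC : X = Cl e u w by apply: (Fam_eq G kg XF uX wX); rewrite eq_sym.
have euw : e u w.
  by apply: (Fam_clique G kg XF) => //; rewrite eq_sym.
have : w \in nbhd e u by rewrite inE.
rewrite -Hcup => /bigcupP [i _ wi].
apply/imsetP; exists i => //; rewrite /f.
case: pickP => [w0 w0i | none]; last by move: (none w); rewrite wi.
have Sne : S i != set0 by apply/set0Pn; exists w.
have euw0 : e u w0.
  have : w0 \in nbhd e u by rewrite -Hcup; apply/bigcupP; exists i.
  by rewrite inE.
have w0C : w0 \in Cl e u w.
  rewrite inE euw0 /=; case: (eqVneq w0 w) => [->|ww0]; first by rewrite !orbT.
  rewrite (Hcl _ Sne w w0) ?orbT // eq_sym //.
have uw0 : u != w0 by apply/eqP => uw0; move: euw0; rewrite uw0 irr.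
by rewrite /= XC (Cl_eq G kg euw (Cl_l _ _ _) w0C uw0).
Qed.

Lemma count_enum (T : finType) (A : {set T}) (p : pred T) :
  count p (enum A) = #|[set x in A | p x]|.
Proof.
rewrite -size_filter -(card_uniqP (filter_uniq _ (enum_uniq (mem A)))).
by apply: eq_card => x; rewrite !inE mem_filter mem_enum andbC.
Qed.

Lemma count_sing (T : finType) (g : T -> nat) (p : T -> pred {set T}) u :
  (forall w, p u [set w] = (w == u)) ->
  count (p u) (flatten [seq nseq (g w) [set w] | w <- enum T]) = g u.
Proof.
move=> Hp; rewrite count_flatten -map_comp sumnE big_map big_enum /=.
rewrite (bigD1 u) //= big1 ?addn0 => [|w wu]; rewrite count_nseq Hp ?eqxx ?mul1n //.
by rewrite (negbTE wu).
Qed.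

Theorem proposition4p6 (T : finType) (e : rel T) (k : nat) :
  simple_graph e -> 0 < k -> k_good e k ->
  exists Msets : seq {set T},
    [/\ (forall i j, i < size Msets -> j < size Msets -> i != j ->
           #|nth set0 Msets i :&: nth set0 Msets j| < 2),
        (forall X, X \in Msets -> is_clique e X),
        (forall u, count (fun X : {set T} => u \in X) Msets = k) &
        (forall u v, e u v ->
           count (fun X : {set T} => (u \in X) && (v \in X)) Msets = 1)].
Proof.
move=> G k0 kg; have [sym irr] := G.
pose d u := #|[set X in Fam e | u \in X]|.
pose L := flatten [seq nseq (k - d w) [set w] | w <- enum T].
have Lsing : forall X, X \in L -> exists w, X = [set w].
  move=> X /flattenP [s /mapP [w _ ->]] /nseqP [-> _]; by exists w.
exists (enum (Fam e) ++ L); split.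
- move=> i j iS jS ij.
  have small : forall Y Z, Y \in L -> #|Y :&: Z| < 2.
    move=> Y Z /Lsing [w ->]; apply: leq_ltn_trans (subset_leq_card (subsetIl _ _)) _.
    by rewrite cards1.
  rewrite size_cat in iS jS.
  case: (ltnP i (size (enum (Fam e)))) => ie.
    case: (ltnP j (size (enum (Fam e)))) => je.
      rewrite !nth_cat ie je.
      apply: (Fam_inter G kg); try by rewrite -mem_enum mem_nth.
      by rewrite nth_uniq ?enum_uniq.
    rewrite setIC nth_cat [j < _]ltnNge je /=; apply: small; apply: mem_nth.
    by rewrite -(ltn_add2l (size (enum (Fam e)))) subnKC.
  rewrite nth_cat [i < _]ltnNge ie /=; apply: small; apply: mem_nth.
  by rewrite -(ltn_add2l (size (enum (Fam e)))) subnKC.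
- move=> X; rewrite mem_cat => /orP [|/Lsing [w ->]].
    by rewrite mem_enum; apply: Fam_clique.
  by move=> x y; rewrite !inE => /eqP -> /eqP ->; rewrite eqxx.
- move=> u; rewrite count_cat count_enum.
  rewrite (@count_sing T (fun w => k - d w) (fun u X => u \in X) u).
    by rewrite subnKC //; apply: Fam_deg.
  by move=> w; rewrite inE eq_sym.
- move=> u v euv; rewrite count_cat count_enum.
  have uv : u != v by apply/eqP => uv; move: euv; rewrite uv irr.
  have -> : [set x in Fam e | (u \in x) && (v \in x)] = [set Cl e u v].
    apply/setP => X; rewrite in_set1 in_set; apply/idP/idP.
      by move=> /andP [XF /andP [uX vX]]; rewrite (Fam_eq G kg XF uX vX uv).
    by move=> /eqP ->; rewrite Cl_in_Fam // Cl_l Cl_r.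
  rewrite cards1 (@eq_in_count _ _ pred0) ?count_pred0 //.
  move=> X /Lsing [w ->]; rewrite !inE /=.
  apply/negbTE/negP => /andP [/eqP uw /eqP vw].
  by move: uv; rewrite uw vw eqxx.
Qed.
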